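(* Let $\mathrm{BS}$ be the Biggs-Smith graph and let $u$ be any vertex; write $D_j(u)=\{w:\operatorname{dist}(w,u)=j\}$. (1) For each $4\le i\le 6$ and each edge $(x,y)$ with $x,y\in D_i(u)$, the $(x,u)$-geodesic and the $(y,u)$-geodesic first meet at a vertex of $D_{i-4}(u)$. (2) Let $(x,y)$ be an edge with $x,y\in D_6(u)$. Then the 4-displaced paths from $x$ to $u$ and from $y$ to $u$ meet only at $u$.
   Context: The Biggs-Smith graph $\mathrm{BS}$ is the cubic graph on the $102$ vertices $ia,ib,ic,id,ie,if$ for $i\in\{1,\dots,17\}$ (indices taken modulo 17, with $0$ written as $17$), whose edges are: $ie\,ia$, $ie\,ib$, $ie\,if$, $if\,ic$, $if\,id$ for each $i$; and $ia\,(i+1)a$, $ib\,(i+4)b$, $ic\,(i+2)c$, $id\,(i+8)d$ for each $i$. In $\mathrm{BS}$, for every vertex $u$ and every $w$ with $1\le \operatorname{dist}(w,u)\le 6$ the $(w,u)$-geodesic (shortest path) is unique, and each $D_j(u)$ with $4\le j\le 6$ induces a perfect matching. For $x\in D_6(u)$, the 4-displaced path from $x$ to $u$ is the path that follows the $(x,u)$-geodesic down to its vertex in $D_4(u)$, then takes the unique edge inside $D_4(u)$ at that vertex to a vertex $z$, and then follows the $(z,u)$-geodesic to $u$. *)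

(* Defs.v *)
From mathcomp Require Import all_boot.
Set Implicit Arguments. Unset Strict Implicit. Unset Printing Implicit Defensive.

(* Vertices of the Biggs-Smith graph: pairs (i, l) with i : 'I_17 the index
   modulo 17 (the paper's index 17 is represented by 0) and l : 'I_6 the
   letter, with a,b,c,d,e,f encoded as 0,1,2,3,4,5. *)
Definition BSvert := ('I_17 * 'I_6)%type.

Definition lA : nat := 0.
Definition lB : nat := 1.
Definition lC : nat := 2.
Definition lD : nat := 3.
Definition lE : nat := 4.
Definition lF : nat := 5.

(* The generating (oriented) edge list of the paper:
   ie-ia, ie-ib, ie-if, if-ic, if-id, ia-(i+1)a, ib-(i+4)b, ic-(i+2)c,
   id-(i+8)d. *)
Definition BSgen (v w : BSvert) : bool :=
  let: (i, l) := v in let: (j, m) := w in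
  [|| [&& val l == lE, val m == lA & j == i],
      [&& val l == lE, val m == lB & j == i],
      [&& val l == lE, val m == lF & j == i],
      [&& val l == lF, val m == lC & j == i],
      [&& val l == lF, val m == lD & j == i],
      [&& val l == lA, val m == lA & val j == (val i + 1) %% 17],
      [&& val l == lB, val m == lB & val j == (val i + 4) %% 17],
      [&& val l == lC, val m == lC & val j == (val i + 2) %% 17]
    | [&& val l == lD, val m == lD & val j == (val i + 8) %% 17]].

Definition BSadj : rel BSvert := fun v w => BSgen v w || BSgen w v.

Fixpoint ball (n : nat) (x : BSvert) : {set BSvert} :=
  match n with
  | 0 => [set x]
  | n'.+1 => ball n' x :|: [set z | [exists w in ball n' x, BSadj w z]]
  end.

(* Graph distance (the graph has 102 vertices, so every finite distance
   is < #|BSvert|). *)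
Definition dist (x y : BSvert) : nat :=
  find (fun n => y \in ball n x) (iota 0 #|{: BSvert}|).

Definition geodesic (x : BSvert) (p : seq BSvert) (u : BSvert) : bool :=
  [&& path BSadj x p, last x p == u & size p == dist x u].

Definition first_meet (x : BSvert) (px : seq BSvert) (y : BSvert)
    (py : seq BSvert) : BSvert :=
  nth x (x :: px) (find (fun w => w \in y :: py) (x :: px)).

(* q (a vertex sequence starting at x) is a 4-displaced path from x to u:
   follow the (x,u)-geodesic down to its vertex in D_4(u), take an edge
   inside D_4(u) to z, then follow the (z,u)-geodesic to u. *)
Definition displaced4 (u x : BSvert) (q : seq BSvert) : Prop :=
  exists (px : seq BSvert) (z : BSvert) (pz : seq BSvert),
    [/\ geodesic x px u,
        dist (nth x (x :: px) (dist x u - 4)) u = 4,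
        BSadj (nth x (x :: px) (dist x u - 4)) z &
        dist z u = 4 /\
        geodesic z pz u /\
        q = take (dist x u - 4).+1 (x :: px) ++ z :: pz].

(* Main.v *)
Require Import Defs.
From mathcomp Require Import all_boot zify.
Set Implicit Arguments. Unset Strict Implicit.
Definition mko (n k : nat) : 'I_n.+1 := Ordinal (ltn_pmod k (ltn0Sn n)).
Definition allV : seq BSvert := [seq (mko 16 i, mko 5 l) | i <- iota 0 17, l <- iota 0 6].
Lemma mkoK n (i : 'I_n.+1) : mko n i = i.
Proof.
by apply: val_inj; rewrite /= modn_small.
Qed.
Lemma Hall (v : BSvert) : v \in allV.
Proof.
case: v => i l; rewrite -[i]mkoK -[l]mkoK.
apply/allpairsP; exists (nat_of_ord i, nat_of_ord l).
by rewrite !mem_iota !ltn_ord.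
Qed.
Definition nbrs (v : BSvert) := [seq w <- allV | BSadj v w].
Definition code (v : BSvert) : nat := val v.1 * 6 + val v.2.
Definition mkNT := map nbrs allV.
Section S.
Variable nb : BSvert -> seq BSvert.
Fixpoint bfs (k : nat) (seen frontier : seq BSvert) : seq (seq BSvert) :=
  match k with 0 => [::] | k'.+1 =>
    frontier :: let nxt := undup [seq w <- flatten (map nb frontier) | w \notin seen] in
                bfs k' (seen ++ nxt) nxt end.
Definition layers (u : BSvert) := bfs 10 [:: u] [:: u].
Definition dd (L : seq (seq BSvert)) (v : BSvert) : nat := find (fun X => v \in X) L.
Variable d : BSvert -> nat.
Definition cert (u : BSvert) : bool :=
  [&& d u == 0,
      all (fun v => if v != u then has (fun w => d w + 1 == d v) (nb v) else true) allV,
      all (fun v => d v < 102) allV &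
      all (fun v => all (fun w => d v <= d w + 1) (nb v)) allV].
Definition uniqp : bool :=
  all (fun v => if 1 <= d v <= 6 then count (fun w => d w + 1 == d v) (nb v) == 1 else true) allV.
Definition par (v : BSvert) : BSvert :=
  nth v [seq w <- nb v | d w + 1 == d v] 0.
Definition geo (v : BSvert) : seq BSvert :=
  traject par (par v) (d v).
Definition part1 : bool :=
  all (fun x => all (fun y => if (4 <= d x <= 6) && (d y == d x) then
     d (first_meet x (geo x) y (geo y)) == d x - 4 else true) (nb x)) allV.
Definition dq x z := take (d x - 4).+1 (x :: geo x) ++ z :: geo z.
Definition part2 (u : BSvert) : bool :=
  all (fun x => all (fun y => if (d x == 6) && (d y == 6) then
     all (fun z1 => if d z1 == 4 then all (fun z2 => if d z2 == 4 then
        all (fun w => if w \in dq y z2 then w == u else true) (dq x z1) else true)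
        (nb (nth y (y :: geo y) (d y - 4))) else true)
        (nb (nth x (x :: geo x) (d x - 4))) else true) (nb x)) allV.
End S.
Definition nbOf (NT : seq (seq BSvert)) (v : BSvert) := nth [::] NT (code v).
Definition mkdl NT u := let L := layers (nbOf NT) u in [seq dd L v | v <- allV].
Definition dOf (dl : seq nat) (v : BSvert) := nth 0 dl (code v).
Definition goodd NT u dl :=
  [&& cert (nbOf NT) (dOf dl) u, uniqp (nbOf NT) (dOf dl), part1 (nbOf NT) (dOf dl)
    & part2 (nbOf NT) (dOf dl) u].
Definition bigcheck_of NT :=
  all (fun v => nbOf NT v == nbrs v) allV && all (fun u => goodd NT u (mkdl NT u)) allV.
Definition bigcheck := bigcheck_of mkNT.
Lemma allgood : bigcheck.
Proof. vm_compute. reflexivity. Qed.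

Lemma ball_mono n m x : n <= m -> ball n x \subset ball m x.
Proof.
elim: m => [|m IH]; first by rewrite leqn0 => /eqP ->.
rewrite leq_eqVlt => /orP[/eqP -> //|]; rewrite ltnS => /IH H.
apply: (subset_trans H); exact: subsetUl.
Qed.

Lemma walk_ball x p : path BSadj x p -> last x p \in ball (size p) x.
Proof.
elim/last_ind: p => [|p z IH] /=; first by rewrite set11.
rewrite rcons_path => /andP[Hp Ha]; rewrite last_rcons size_rcons /=.
apply/setUP; right; rewrite inE; apply/existsP; exists (last x p).
by rewrite IH.
Qed.

Lemma ball_walk n x z : z \in ball n x ->
  exists p, [/\ path BSadj x p, last x p = z & size p <= n].
Proof.
elim: n z => [|n IH] z /=.
  by rewrite inE => /eqP ->; exists [::].
case/setUP.
  by move/IH => [p [H1 H2 H3]]; exists p; split => //; apply: leqW.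
rewrite inE => /existsP [w /andP [/IH [p [H1 H2 H3]] Hwz]].
exists (rcons p z); rewrite rcons_path last_rcons size_rcons H1 H2 Hwz; split => //.
Qed.

Section Gen.
Variable nb : BSvert -> seq BSvert.
Variable d : BSvert -> nat.
Variable u : BSvert.
Hypothesis Hnb : forall v w, (w \in nb v) = BSadj v w.
Hypothesis Hc : cert nb d u.

Lemma du0 : d u = 0.
Proof. by case/and4P: Hc => /eqP. Qed.

Lemma dlip v w : BSadj v w -> d v <= d w + 1.
Proof.
case/and4P: Hc => _ _ _ /allP H Hvw.
by have /allP := H v (Hall v); apply; rewrite Hnb.
Qed.

Lemma lip v p : path BSadj v p -> d v <= size p + d (last v p).
Proof.
elim: p v => [|w p IH] v /=; first by [].
case/andP => Ha /IH H; have H0 := dlip Ha; apply: (leq_trans H0).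
by rewrite addn1 addSn ltnS.
Qed.

Lemma desc k v : d v = k -> exists p, [/\ path BSadj v p, last v p = u & size p = k].
Proof.
elim: k v => [|k IH] v Hv.
  exists [::]; split => //=.
  case: (eqVneq v u) => // Hne.
  case/and4P: Hc => _ /allP H _ _.
  by have := H v (Hall v); rewrite Hne => /hasP [w _]; rewrite Hv addn1.
case: (eqVneq v u) => [Heq|Hne]; first by move: Hv; rewrite Heq du0.
case/and4P: Hc => _ /allP H _ _.
have := H v (Hall v); rewrite Hne => /hasP [w Hw /eqP].
rewrite Hv addn1 => /eqP; rewrite eqSS => /eqP /IH [p [H1 H2 H3]].
exists (w :: p); split => //=; last by rewrite H3.
by move: Hw; rewrite Hnb => ->.
Qed.

Lemma find_eq (a : pred nat) s k x0 : k < size s -> a (nth x0 s k) ->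
  (forall j, j < k -> ~~ a (nth x0 s j)) -> find a s = k.
Proof.
move=> Hk Ha Hb; case: (ltngtP (find a s) k) => // H.
  have Hh : has a s by rewrite has_find (ltn_trans H).
  by have := nth_find x0 Hh; rewrite (negbTE (Hb _ H)).
by have := before_find x0 H; rewrite Ha.
Qed.

Lemma dist_d v : dist v u = d v.
Proof.
rewrite /dist card_prod !card_ord.
have Hlt : d v < 102.
  by case/and4P: Hc => _ _ /allP H _; apply: H (Hall v).
apply: (@find_eq _ _ _ 0); rewrite ?size_iota ?nth_iota //.
  have [p [H1 H2 H3]] := desc (erefl (d v)).
  by rewrite -H2 -H3 walk_ball.
move=> j Hj; rewrite nth_iota ?(ltn_trans Hj) //; apply/negP.
move/ball_walk => [p [H1 H2 H3]].
have := lip H1; rewrite H2 du0 addn0 => H.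
by have := leq_trans H H3; rewrite leqNgt Hj.
Qed.

Hypothesis Hu : uniqp nb d.

Lemma par_uniq v w : 1 <= d v <= 6 -> BSadj v w -> d w + 1 = d v -> w = par nb d v.
Proof.
move=> Hr Hvw Hd.
have /allP H := Hu; have := H v (Hall v); rewrite Hr => /eqP Hcnt.
rewrite /par; move: Hcnt; rewrite -size_filter.
have : w \in [seq w <- nb v | d w + 1 == d v] by rewrite mem_filter Hd eqxx Hnb.
case: [seq w <- nb v | d w + 1 == d v] => [|a [|b s]] //=.
by rewrite inE => /eqP.
Qed.

Lemma geo_eq px v : d v <= 6 -> path BSadj v px -> last v px = u ->
  size px = d v -> px = geo nb d v.
Proof.
elim: px v => [|w px IH] v Hv6 /=.
  by move=> _ _ Hs; rewrite /geo -Hs.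
case/andP => Hvw Hp Hl Hs.
have H1 := lip Hp; rewrite Hl du0 addn0 in H1.
have H2 := dlip Hvw.
have Hdw : d w = size px.
  by move: H1 H2; rewrite -Hs; lia.
have Hpw : w = par nb d v.
  by apply: par_uniq => //; move: Hv6; rewrite -Hs ?Hdw; lia.
rewrite /geo -Hs -Hdw /= -Hpw; congr cons.
by apply: IH => //; move: Hv6; rewrite -Hs Hdw; lia.
Qed.

End Gen.

Theorem corollary2p6 (u : BSvert) :
  (forall (i : nat) (x y : BSvert) (px py : seq BSvert),
      4 <= i <= 6 -> BSadj x y -> dist x u = i -> dist y u = i ->
      geodesic x px u -> geodesic y py u ->
      dist (first_meet x px y py) u = i - 4)
  /\
  (forall (x y : BSvert) (qx qy : seq BSvert),
      BSadj x y -> dist x u = 6 -> dist y u = 6 ->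
      displaced4 u x qx -> displaced4 u y qy ->
      forall w, w \in qx -> w \in qy -> w = u).
Proof.
have := allgood; rewrite /bigcheck; move: mkNT => NT.
case/andP => /allP HNT /allP Hg.
have Hnb : forall v w, (w \in nbOf NT v) = BSadj v w.
  move=> v w; have := HNT v (Hall v) => /eqP ->.
  by rewrite mem_filter Hall andbT.
have := Hg u (Hall u); move: (mkdl NT u) => dl.
case/and4P => Hc Hu H1 H2.
set nb := nbOf NT in Hnb Hc Hu H1 H2; set d := dOf dl in Hc Hu H1 H2.
have Hd := dist_d Hnb Hc.
have Hgeo : forall v p, d v <= 6 -> geodesic v p u -> p = geo nb d v.
  move=> v p Hv /and3P [Hp /eqP Hl /eqP Hs].
  by apply: (geo_eq Hnb Hc Hu) => //; rewrite Hs Hd.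
split.
  move=> i x y px py Hi Hxy; rewrite !Hd => Hdx Hdy Hgx Hgy.
  have Hi6 : i <= 6 by case/andP: Hi.
  rewrite (Hgeo x px) ?Hdx // (Hgeo y py) ?Hdy //.
  move/allP: H1 => /(_ x (Hall x)) /allP /(_ y); rewrite Hnb => /(_ Hxy).
  by rewrite Hdx Hdy Hi eqxx /= => /eqP.
move=> x y qx qy Hxy; rewrite !Hd => Hdx Hdy.
move=> [px [z1 [pz1 [Hgx _ Ha1 [Hz1 [Hgz1 Hq1]]]]]].
move=> [py [z2 [pz2 [Hgy _ Ha2 [Hz2 [Hgz2 Hq2]]]]]].
rewrite Hd in Hz1; rewrite Hd in Hz2; rewrite Hd in Ha1; rewrite Hd in Ha2;
rewrite Hd in Hq1; rewrite Hd in Hq2.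
rewrite (Hgeo x px) ?Hdx // in Ha1 Hq1.
rewrite (Hgeo y py) ?Hdy // in Ha2 Hq2.
rewrite (Hgeo z1 pz1) ?Hz1 // in Hq1.
rewrite (Hgeo z2 pz2) ?Hz2 // in Hq2.
move=> w Hw1 Hw2.
move/allP: H2 => /(_ x (Hall x)) /allP /(_ y); rewrite Hnb => /(_ Hxy).
rewrite Hdx Hdy eqxx => /allP /(_ z1); rewrite Hnb => /(_ Ha1).
rewrite Hz1 eqxx => /allP /(_ z2); rewrite Hnb => /(_ Ha2).
rewrite Hz2 eqxx => /allP /(_ w).
rewrite /dq Hdx Hdy -Hq1 -Hq2 => /(_ Hw1).
by rewrite Hw2 => /eqP.
Qed.
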